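(* Let $S$ be a $\Sigma_1$-sequent, $H$ a Herbrand structure of $S$, $D$ a decomposition of $H$, $S^\sim$ the schematic extended Herbrand sequent of $S$ w.r.t. $D$, and $C=C(S^\sim)$ its canonical formula. Let $\mathcal F$ be the set of propositional formulas (built with $\wedge,\vee,\neg,\bot,\top$) whose atoms are atoms occurring in $C$, and define $F\sim G$ iff $F\leftrightarrow G$ is E-valid. Let $\mathcal S\subseteq\mathcal F$ be the set of $A\in\mathcal F$ such that $[X\backslash\lambda\bar\alpha.A]$ is a solution of $S^\sim$. Then: (1) $\mathcal B=(\mathcal F/{\sim},\wedge,\vee,\neg,\bot,\top)$ is a Boolean algebra (with order $[F]\le[G]$ iff $F\to G$ is E-valid); (2) $\mathcal S/{\sim}$ is closed under $\wedge$ and is convex in $(\mathcal F/{\sim},\le)$, i.e. whenever $[A]\le[B]\le[A']$ with $A,A'\in\mathcal S$ and $B\in\mathcal F$, then $B\in\mathcal S$; thus $(\mathcal S/{\sim},\wedge)$ is a convex subalgebra of the meet-semilattice $(\mathcal F/{\sim},\wedge)$; (3) $[C]$ is the least element of $(\mathcal S/{\sim},\le)$.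
   Context: We work in first-order predicate logic with equality. A $\Sigma_1$-sequent is a sequent $S$ of the form $\forall\bar x_1 F_1,\dots,\forall\bar x_p F_p\vdash\exists\bar x_{p+1}F_{p+1},\dots,\exists\bar x_q F_q$, where each $F_i$ is quantifier-free and $\bar x_i$ is a block of $k_i\ge 0$ variables. A sequent is E-valid if it is valid in predicate logic with equality (a quantifier-free formula or sequent with free variables is called E-valid if its universal closure is); a quasi-tautology is a quantifier-free E-valid sequent. A Herbrand structure of $S$ is a tuple $H=(H_1,\dots,H_q)$, $H_i$ a finite set of $k_i$-vectors of ground terms, such that, with $\mathcal F_i=\{F_i[\bar x_i\backslash\bar t]:\bar t\in H_i\}$ if $k_i>0$ and $\mathcal F_i=\{F_i\}$ if $k_i=0$, the sequent $\mathcal F_1\cup\dots\cup\mathcal F_p\vdash\mathcal F_{p+1}\cup\dots\cup\mathcal F_q$ is a quasi-tautology. A decomposition of $H$ is a pair $D=(U_1,\dots,U_q)\circ W$ where, for fresh variables $\bar\alpha=(\alpha_1,\dots,\alpha_n)$, each $U_i$ is a finite set of $k_i$-vectors of terms possibly containing the $\alpha_j$, and $W=\{\bar w_1,\dots,\bar w_k\}$ is a finite set of $n$-vectors of ground terms not containing any $\alpha_j$, such that $H_i=\{u[\bar\alpha\backslash\bar w]:u\in U_i,\bar w\in W\}$ for every $i$ with $k_i>0$. Put $\mathcal F'_i=\{F_i[\bar x_i\backslash\bar t]:\bar t\in U_i\}$ if $k_i>0$ and $\mathcal F'_i=\{F_i\}$ if $k_i=0$. For an $n$-place predicate variable $X$,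 the schematic extended Herbrand sequent of $S$ w.r.t. $D$ is $$S^\sim:\ X\bar\alpha\to\bigwedge_{i=1}^k X\bar w_i,\ \mathcal F'_1,\dots,\mathcal F'_p\vdash\mathcal F'_{p+1},\dots,\mathcal F'_q.$$ For a quantifier-free formula $A$ whose free variables are among $\alpha_1,\dots,\alpha_n$, the second-order substitution $[X\backslash\lambda\bar\alpha.A]$ is a solution of $S^\sim$ if $S^\sim[X\backslash\lambda\bar\alpha.A]$ is a quasi-tautology. Let $F[l]$ be the conjunction of all formulas in $\mathcal F'_1\cup\dots\cup\mathcal F'_p$ and $F[r]$ the disjunction of all formulas in $\mathcal F'_{p+1}\cup\dots\cup\mathcal F'_q$. The canonical formula is $C(S^\sim)=F[l]\wedge\neg F[r]$. *)

(* Defs.v *)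
From Stdlib Require Import List Arith Classical.
Import ListNotations.

(* Variables are natural numbers; function and predicate symbols are
   natural numbers (a symbol applied to argument lists of different lengths
   is interpreted independently, i.e. symbols are effectively (name,arity)). *)
Inductive term : Type :=
| Var : nat -> term
| Fn  : nat -> list term -> term.

Inductive atom : Type :=
| AEq   : term -> term -> atom
| APred : nat -> list term -> atom.

Inductive form : Type :=
| FAtom : atom -> form
| FBot  : form
| FTop  : form
| FNot  : form -> form
| FAnd  : form -> form -> form
| FOr   : form -> form -> form
| FImp  : form -> form -> form.

Fixpoint tsubst (s : nat -> term) (t : term) : term :=
  match t with
  | Var x => s x
  | Fn f ts => Fn f (map (tsubst s) ts)
  end.

Definition asubst (s : nat -> term) (a : atom) : atom :=
  match a with
  | AEq t u => AEq (tsubst s t) (tsubst s u)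
  | APred p ts => APred p (map (tsubst s) ts)
  end.

Fixpoint fsubst (s : nat -> term) (A : form) : form :=
  match A with
  | FAtom a => FAtom (asubst s a)
  | FBot => FBot
  | FTop => FTop
  | FNot B => FNot (fsubst s B)
  | FAnd B C => FAnd (fsubst s B) (fsubst s C)
  | FOr B C => FOr (fsubst s B) (fsubst s C)
  | FImp B C => FImp (fsubst s B) (fsubst s C)
  end.

Definition inst_vec (v : list term) : nat -> term := fun j => nth j v (Var j).

Fixpoint tvars_lt (n : nat) (t : term) : Prop :=
  match t with
  | Var j => j < n
  | Fn _ ts =>
      (fix go (l : list term) : Prop :=
         match l with
         | [] => True
         | u :: l' => tvars_lt n u /\ go l'
         end) ts
  end.

Definition avars_lt (n : nat) (a : atom) : Prop :=
  match a with
  | AEq t u => tvars_lt n t /\ tvars_lt n u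
  | APred _ ts => Forall (tvars_lt n) ts
  end.

Fixpoint fvars_lt (n : nat) (A : form) : Prop :=
  match A with
  | FAtom a => avars_lt n a
  | FBot | FTop => True
  | FNot B => fvars_lt n B
  | FAnd B C | FOr B C | FImp B C => fvars_lt n B /\ fvars_lt n C
  end.

Definition ground (t : term) : Prop := tvars_lt 0 t.

Fixpoint atoms (A : form) : list atom :=
  match A with
  | FAtom a => [a]
  | FBot | FTop => []
  | FNot B => atoms B
  | FAnd B C | FOr B C | FImp B C => atoms B ++ atoms C
  end.

Fixpoint no_imp (A : form) : Prop :=
  match A with
  | FAtom _ | FBot | FTop => True
  | FNot B => no_imp B
  | FAnd B C | FOr B C => no_imp B /\ no_imp C
  | FImp _ _ => False
  end.

Record structure : Type := {
  dom : Type;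
  fn  : nat -> list dom -> dom;
  pr  : nat -> list dom -> Prop
}.

Fixpoint teval (M : structure) (rho : nat -> dom M) (t : term) : dom M :=
  match t with
  | Var x => rho x
  | Fn f ts => fn M f (map (teval M rho) ts)
  end.

Definition aeval (M : structure) (rho : nat -> dom M) (a : atom) : Prop :=
  match a with
  | AEq t u => teval M rho t = teval M rho u
  | APred p ts => pr M p (map (teval M rho) ts)
  end.

Fixpoint feval (M : structure) (rho : nat -> dom M) (A : form) : Prop :=
  match A with
  | FAtom a => aeval M rho a
  | FBot => False
  | FTop => True
  | FNot B => ~ feval M rho B
  | FAnd B C => feval M rho B /\ feval M rho C
  | FOr B C => feval M rho B \/ feval M rho C
  | FImp B C => feval M rho B -> feval M rho C
  end.

(* E-validity of a quantifier-free formula (= validity of its universal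
   closure in predicate logic with equality) *)
Definition Evalid (A : form) : Prop :=
  forall (M : structure) (rho : nat -> dom M), feval M rho A.

Definition Eequiv (A B : form) : Prop := Evalid (FAnd (FImp A B) (FImp B A)).

Definition Ele (A B : form) : Prop := Evalid (FImp A B).

Definition quasi_taut (Gamma Delta : list form) : Prop :=
  forall (M : structure) (rho : nat -> dom M),
    (forall A, In A Gamma -> feval M rho A) ->
    exists B, In B Delta /\ feval M rho B.

Definition conj_list (l : list form) : form := fold_right FAnd FTop l.
Definition disj_list (l : list form) : form := fold_right FOr FBot l.

(* A Sigma_1-sequent  forall x1 F1, ..., forall xp Fp |- exists x(p+1) F(p+1), ..., exists xq Fq.
   Each component is a pair (k_i, F_i); the bound block x_i consists of the
   variables Var 0, ..., Var (k_i - 1) of F_i. *)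
Record sig1seq : Type := {
  ante : list (nat * form);
  succ : list (nat * form)
}.

Definition sig1_wf (S : sig1seq) : Prop :=
  forall kF, In kF (ante S ++ succ S) -> fvars_lt (fst kF) (snd kF).

Definition inst_comp (kF : nat * form) (Vs : list (list term)) : list form :=
  match fst kF with
  | 0 => [snd kF]
  | S _ => map (fun t => fsubst (inst_vec t) (snd kF)) Vs
  end.

Definition inst_side (comps : list (nat * form)) (Vss : list (list (list term)))
  : list form :=
  concat (map (fun p => inst_comp (fst p) (snd p)) (combine comps Vss)).

(* H = (H_1, ..., H_q), split into the antecedent part and succedent part;
   each H_i is a finite set (list) of k_i-vectors of terms *)
Record hstruct : Type := {
  hA : list (list (list term));
  hS : list (list (list term))
}.

Definition vecs_ok (comps : list (nat * form)) (Vss : list (list (list term)))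
  (P : term -> Prop) : Prop :=
  length Vss = length comps /\
  forall i kF Vs v, nth_error comps i = Some kF -> nth_error Vss i = Some Vs ->
    In v Vs -> length v = fst kF /\ Forall P v.

Definition is_herbrand (S : sig1seq) (H : hstruct) : Prop :=
  vecs_ok (ante S) (hA H) ground /\
  vecs_ok (succ S) (hS H) ground /\
  quasi_taut (inst_side (ante S) (hA H)) (inst_side (succ S) (hS H)).

(* D = (U_1,...,U_q) o W, with fresh variables alpha_1..alpha_n represented
   by Var 0, ..., Var (n-1) (fresh, since the sequent is closed) *)
Record decomp : Type := {
  dn : nat;
  uA : list (list (list term));
  uS : list (list (list term));
  dW : list (list term)
}.

Definition decomp_side (comps : list (nat * form)) (Hs Us : list (list (list term)))
  (W : list (list term)) : Prop :=
  forall i kF Hi Ui, nth_error comps i = Some kF -> nth_error Hs i = Some Hi ->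
    nth_error Us i = Some Ui -> 0 < fst kF ->
    forall v, In v Hi <->
      exists u w, In u Ui /\ In w W /\ v = map (tsubst (inst_vec w)) u.

Definition is_decomposition (S : sig1seq) (H : hstruct) (D : decomp) : Prop :=
  vecs_ok (ante S) (uA D) (tvars_lt (dn D)) /\
  vecs_ok (succ S) (uS D) (tvars_lt (dn D)) /\
  (forall w, In w (dW D) -> length w = dn D /\ Forall ground w) /\
  decomp_side (ante S) (hA H) (uA D) (dW D) /\
  decomp_side (succ S) (hS H) (uS D) (dW D).

Definition Fl (S : sig1seq) (D : decomp) : list form := inst_side (ante S) (uA D).
Definition Fr (S : sig1seq) (D : decomp) : list form := inst_side (succ S) (uS D).

(* S~[X \ lambda alpha. A]:
   A -> /\_i A[alpha\w_i], F'_1,...,F'_p |- F'_(p+1),...,F'_q *)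
Definition ext_seq_ante (S : sig1seq) (D : decomp) (A : form) : list form :=
  FImp A (conj_list (map (fun w => fsubst (inst_vec w) A) (dW D))) :: Fl S D.

Definition is_solution (S : sig1seq) (D : decomp) (A : form) : Prop :=
  fvars_lt (dn D) A /\ quasi_taut (ext_seq_ante S D A) (Fr S D).

Definition canon (S : sig1seq) (D : decomp) : form :=
  FAnd (conj_list (Fl S D)) (FNot (disj_list (Fr S D))).

Definition in_calF (S : sig1seq) (D : decomp) (A : form) : Prop :=
  no_imp A /\ forall a, In a (atoms A) -> In a (atoms (canon S D)).

Definition in_calS (S : sig1seq) (D : decomp) (A : form) : Prop :=
  in_calF S D A /\ is_solution S D A.

(* (P / eqv, meet, join, neg, bot, top) is a Boolean algebra:
   P is closed under the operations, eqv is a congruence on P, and the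
   quotient satisfies the axioms of a bounded, distributive, complemented
   lattice. *)
Definition BoolAlgUpTo (P : form -> Prop) (eqv : form -> form -> Prop)
  (meet join : form -> form -> form) (neg : form -> form) (bot top : form) : Prop :=
  P bot /\ P top /\
  (forall x, P x -> P (neg x)) /\
  (forall x y, P x -> P y -> P (meet x y)) /\
  (forall x y, P x -> P y -> P (join x y)) /\
  (forall x, P x -> eqv x x) /\
  (forall x y, P x -> P y -> eqv x y -> eqv y x) /\
  (forall x y z, P x -> P y -> P z -> eqv x y -> eqv y z -> eqv x z) /\
  (forall x x', P x -> P x' -> eqv x x' -> eqv (neg x) (neg x')) /\
  (forall x x' y y', P x -> P x' -> P y -> P y' -> eqv x x' -> eqv y y' ->
     eqv (meet x y) (meet x' y')) /\
  (forall x x' y y', P x -> P x' -> P y -> P y' -> eqv x x' -> eqv y y' ->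
     eqv (join x y) (join x' y')) /\
  (forall x y, P x -> P y -> eqv (meet x y) (meet y x)) /\
  (forall x y, P x -> P y -> eqv (join x y) (join y x)) /\
  (forall x y z, P x -> P y -> P z -> eqv (meet x (meet y z)) (meet (meet x y) z)) /\
  (forall x y z, P x -> P y -> P z -> eqv (join x (join y z)) (join (join x y) z)) /\
  (forall x y, P x -> P y -> eqv (meet x (join x y)) x) /\
  (forall x y, P x -> P y -> eqv (join x (meet x y)) x) /\
  (forall x y z, P x -> P y -> P z ->
     eqv (meet x (join y z)) (join (meet x y) (meet x z))) /\
  (forall x y z, P x -> P y -> P z ->
     eqv (join x (meet y z)) (meet (join x y) (join x z))) /\
  (forall x, P x -> eqv (meet x top) x) /\
  (forall x, P x -> eqv (join x bot) x) /\
  (forall x, P x -> eqv (meet x (neg x)) bot) /\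
  (forall x, P x -> eqv (join x (neg x)) top).

(* Main.v *)
Require Import Defs.
From Stdlib Require Import List Arith Classical Lia.
Import ListNotations.

Fixpoint term_ind' (P : term -> Prop) (hv : forall n, P (Var n))
  (hf : forall f ts, Forall P ts -> P (Fn f ts)) (t : term) : P t :=
  match t with
  | Var n => hv n
  | Fn f ts => hf f ts ((fix go (l : list term) : Forall P l :=
      match l with
      | [] => Forall_nil _
      | u :: l' => Forall_cons _ (term_ind' P hv hf u) (go l')
      end) ts)
  end.

Lemma tvars_lt_Fn n f ts : tvars_lt n (Fn f ts) <-> Forall (tvars_lt n) ts.
Proof.
  simpl. induction ts as [|u l IH]; simpl.
  - split; auto.
  - rewrite IH. split; [intros [A B]; constructor; auto | intros HH; inversion HH; auto].
Qed.

Lemma teval_subst M rho s t :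
  teval M rho (tsubst s t) = teval M (fun x => teval M rho (s x)) t.
Proof.
  induction t using term_ind'; simpl; auto.
  f_equal. rewrite map_map. apply map_ext_in. intros a Ha.
  rewrite Forall_forall in H. auto.
Qed.

Lemma feval_subst M rho s A :
  feval M rho (fsubst s A) <-> feval M (fun x => teval M rho (s x)) A.
Proof.
  induction A; simpl; try tauto.
  destruct a; simpl.
  - rewrite !teval_subst. tauto.
  - rewrite map_map, (map_ext _ _ (fun t => teval_subst M rho s t)). tauto.
Qed.

Lemma teval_cong M k r1 r2 t : tvars_lt k t -> (forall x, x < k -> r1 x = r2 x) ->
  teval M r1 t = teval M r2 t.
Proof.
  intros Ht Hr. induction t using term_ind'; [simpl in *; auto|].
  simpl. rewrite tvars_lt_Fn in Ht. f_equal. apply map_ext_in. intros a Ha.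
  rewrite Forall_forall in H, Ht. auto.
Qed.

Lemma feval_cong M k r1 r2 A : fvars_lt k A -> (forall x, x < k -> r1 x = r2 x) ->
  (feval M r1 A <-> feval M r2 A).
Proof.
  intros HA Hr. induction A; simpl in *; try tauto.
  - destruct a; simpl in *.
    + destruct HA. rewrite (teval_cong M k r1 r2 t), (teval_cong M k r1 r2 t0); tauto.
    + replace (map (teval M r1) l) with (map (teval M r2) l); [tauto|].
      apply map_ext_in. intros a Ha. rewrite Forall_forall in HA.
      symmetry; eapply teval_cong; eauto.
  all: try (destruct HA; rewrite IHA1, IHA2; tauto).
Qed.

Lemma tvars_mono k n t : k <= n -> tvars_lt k t -> tvars_lt n t.
Proof.
  intros Hk. induction t using term_ind'; [simpl; lia|].
  rewrite !tvars_lt_Fn, !Forall_forall. intros HH x Hx.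
  rewrite Forall_forall in H. auto.
Qed.

Lemma fvars_mono k n A : k <= n -> fvars_lt k A -> fvars_lt n A.
Proof.
  intros Hk. induction A; simpl; try tauto.
  - destruct a; simpl.
    + intros [? ?]; split; eapply tvars_mono; eauto.
    + rewrite !Forall_forall. intros; eapply tvars_mono; eauto.
  all: try (intros [? ?]; auto).
Qed.

Lemma tvars_subst k n s t : tvars_lt k t -> (forall x, x < k -> tvars_lt n (s x)) ->
  tvars_lt n (tsubst s t).
Proof.
  intros Ht Hs. induction t using term_ind'; [simpl in *; auto|].
  change (tvars_lt n (Fn f (map (tsubst s) ts))).
  rewrite tvars_lt_Fn in *. rewrite Forall_forall in H, Ht |- *. intros x Hx.
  apply in_map_iff in Hx. destruct Hx as [y [<- Hy]]. auto.
Qed.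

Lemma fvars_subst k n s A : fvars_lt k A -> (forall x, x < k -> tvars_lt n (s x)) ->
  fvars_lt n (fsubst s A).
Proof.
  intros HA Hs. induction A; simpl in *; try tauto.
  - destruct a; simpl in *.
    + destruct HA; split; eapply tvars_subst; eauto.
    + rewrite Forall_forall in *. intros x Hx.
      apply in_map_iff in Hx. destruct Hx as [y [<- Hy]]. eapply tvars_subst; eauto.
  all: try (destruct HA; auto).
Qed.

Lemma fvars_atoms n A : fvars_lt n A <-> (forall a, In a (atoms A) -> avars_lt n a).
Proof.
  induction A; simpl.
  - split; [intros ? b [<-|[]]; auto | intros HH; apply HH; auto].
  - split; [intros _ a []| auto].
  - split; [intros _ a []| auto].
  - auto.
  - rewrite IHA1, IHA2. split.
    + intros [X Y] a Ha. apply in_app_or in Ha. destruct Ha; auto.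
    + intros HH; split; intros; apply HH; apply in_or_app; auto.
  - rewrite IHA1, IHA2. split.
    + intros [X Y] a Ha. apply in_app_or in Ha. destruct Ha; auto.
    + intros HH; split; intros; apply HH; apply in_or_app; auto.
  - rewrite IHA1, IHA2. split.
    + intros [X Y] a Ha. apply in_app_or in Ha. destruct Ha; auto.
    + intros HH; split; intros; apply HH; apply in_or_app; auto.
Qed.

Lemma feval_conj M rho l : feval M rho (conj_list l) <-> forall A, In A l -> feval M rho A.
Proof.
  induction l; simpl.
  - split; auto. intros _ A [].
  - rewrite IHl. split.
    + intros [X Y] A [<-|HA]; auto.
    + intros HH; split; auto.
Qed.

Lemma feval_disj M rho l : feval M rho (disj_list l) <-> exists A, In A l /\ feval M rho A.
Proof.
  induction l; simpl.
  - split; [intros []| intros [A [[] _]]].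
  - rewrite IHl. split.
    + intros [X|[A [HA HB]]]; eauto.
    + intros [A [[<-|HA] HB]]; eauto.
Qed.

Lemma fvars_conj n l : (forall A, In A l -> fvars_lt n A) -> fvars_lt n (conj_list l).
Proof. induction l; simpl; auto. Qed.

Lemma fvars_disj n l : (forall A, In A l -> fvars_lt n A) -> fvars_lt n (disj_list l).
Proof. induction l; simpl; auto. Qed.

Lemma inst_side_in comps Vss A : In A (inst_side comps Vss) ->
  exists i kF Vs, nth_error comps i = Some kF /\ nth_error Vss i = Some Vs /\
    In A (inst_comp kF Vs).
Proof.
  unfold inst_side. revert Vss. induction comps as [|c cs IH]; intros [|V Vs]; simpl;
    try tauto.
  intros HA. apply in_app_or in HA. destruct HA as [HA|HA].
  - exists 0, c, V; simpl; auto.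
  - destruct (IH Vs HA) as [i [kF [W [X [Y Z]]]]]. exists (S i), kF, W; simpl; auto.
Qed.

Lemma inst_side_in2 comps Vss A i kF Vs : nth_error comps i = Some kF ->
  nth_error Vss i = Some Vs -> In A (inst_comp kF Vs) -> In A (inst_side comps Vss).
Proof.
  unfold inst_side. revert Vss i. induction comps as [|c cs IH]; intros [|V Vs'] [|i];
    simpl; try discriminate; intros X Y Z.
  - inversion X; inversion Y; subst. apply in_or_app; auto.
  - apply in_or_app; right. eapply IH; eauto.
Qed.

Lemma inst_side_vars comps Us n A :
  (forall kF, In kF comps -> fvars_lt (fst kF) (snd kF)) ->
  vecs_ok comps Us (tvars_lt n) ->
  In A (inst_side comps Us) -> fvars_lt n A.
Proof.
  intros Hwf [Hlen Hv] HA. apply inst_side_in in HA.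
  destruct HA as [i [kF [U [X [Y Z]]]]].
  assert (Hk := Hwf kF (nth_error_In _ _ X)).
  unfold inst_comp in Z. destruct (fst kF) eqn:E.
  - destruct Z as [<-|[]]. eapply fvars_mono; [|eauto]; lia.
  - apply in_map_iff in Z. destruct Z as [u [<- Hu]].
    destruct (Hv i kF U u X Y Hu) as [Hl Hf].
    eapply fvars_subst; [eauto|]. intros x Hx. unfold inst_vec.
    rewrite Forall_forall in Hf. apply Hf. apply nth_In. lia.
Qed.

Fixpoint ei (A : form) : form :=
  match A with
  | FAtom a => FAtom a
  | FBot => FBot
  | FTop => FTop
  | FNot B => FNot (ei B)
  | FAnd B C => FAnd (ei B) (ei C)
  | FOr B C => FOr (ei B) (ei C)
  | FImp B C => FOr (FNot (ei B)) (ei C)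
  end.

Lemma ei_noimp A : no_imp (ei A).
Proof. induction A; simpl; auto. Qed.

Lemma ei_atoms A : atoms (ei A) = atoms A.
Proof. induction A; simpl; congruence. Qed.

Lemma ei_eval M rho A : feval M rho (ei A) <-> feval M rho A.
Proof.
  induction A; simpl; try tauto.
Qed.

Ltac bsolve := repeat split; intros;
  unfold Eequiv, Evalid in *; intros; simpl in *; try tauto.

Theorem mainTheorem2 (S : sig1seq) (H : hstruct) (D : decomp) :
  sig1_wf S -> is_herbrand S H -> is_decomposition S H D ->
  (* (1) F/~ is a Boolean algebra, with order [F] <= [G] iff F -> G E-valid *)
  (BoolAlgUpTo (in_calF S D) Eequiv FAnd FOr FNot FBot FTop /\
   (forall F G, in_calF S D F -> in_calF S D G ->
      (Ele F G <-> Eequiv (FAnd F G) F))) /\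
  (* (2) S/~ is closed under /\ and convex in (F/~, <=) *)
  (forall A B, in_calS S D A -> in_calS S D B -> in_calS S D (FAnd A B)) /\
  (forall A B A', in_calS S D A -> in_calS S D A' -> in_calF S D B ->
      Ele A B -> Ele B A' -> in_calS S D B) /\
  (* (3) [C] is the least element of (S/~, <=) *)
  (exists C0, in_calF S D C0 /\ Eequiv C0 (canon S D)) /\
  (forall C0, in_calF S D C0 -> Eequiv C0 (canon S D) ->
      in_calS S D C0 /\ (forall A, in_calS S D A -> Ele C0 A)).
Proof.
  intros Hwf Hher Hdec.
  assert (Hwfa : forall kF, In kF (ante S) -> fvars_lt (fst kF) (snd kF))
    by (intros; apply Hwf; apply in_or_app; auto).
  assert (Hwfs : forall kF, In kF (succ S) -> fvars_lt (fst kF) (snd kF))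
    by (intros; apply Hwf; apply in_or_app; auto).
  destruct Hdec as [HuA [HuS [HW [HdA HdS]]]].
  assert (Hcv : fvars_lt (dn D) (canon S D)).
  { unfold canon; simpl; split.
    - apply fvars_conj. intros; apply (inst_side_vars (ante S) (uA D)); auto.
    - apply fvars_disj. intros; apply (inst_side_vars (succ S) (uS D)); auto. }
  assert (HFv : forall B, in_calF S D B -> fvars_lt (dn D) B).
  { intros B [_ HB]. apply fvars_atoms. intros a Ha.
    rewrite fvars_atoms in Hcv. auto. }
  assert (Hconj : forall M rho A, feval M rho
      (conj_list (map (fun w => fsubst (inst_vec w) A) (dW D))) <->
      forall w, In w (dW D) -> feval M (fun x => teval M rho (inst_vec w x)) A).
  { intros. rewrite feval_conj. split.
    - intros HH w Hw. apply feval_subst. apply HH. apply in_map_iff; eauto.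
    - intros HH B HB. apply in_map_iff in HB. destruct HB as [w [<- Hw]].
      apply feval_subst; auto. }
  assert (HvalS : forall X s M rho, Evalid X -> feval M rho (fsubst s X)).
  { intros. apply feval_subst. apply H0. }
  split; [|split; [|split; [|split]]].
  -
    split.
    + unfold BoolAlgUpTo, in_calF.
      unfold BoolAlgUpTo, in_calF.
      split; [split; [exact I | intros b []]|].
      split; [split; [exact I | intros b []]|].
      split; [intros x [Hx1 Hx2]; split; [exact Hx1 | exact Hx2]|].
      split; [intros x y [Hx1 Hx2] [Hy1 Hy2]; split; [split; assumption|];
              intros b Hb; apply in_app_or in Hb; destruct Hb; auto|].
      split; [intros x y [Hx1 Hx2] [Hy1 Hy2]; split; [split; assumption|];
              intros b Hb; apply in_app_or in Hb; destruct Hb; auto|].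
      repeat match goal with |- _ /\ _ => split end.
      all: intros.
      all: unfold Eequiv, Evalid in *; intros M rho;
        repeat match goal with Hx : forall (M0 : structure) (r : nat -> dom M0), _ |- _ =>
          specialize (Hx M rho) end; simpl in *; try tauto.
      all: match goal with |- context [feval ?M ?rho ?x] => pose proof (classic (feval M rho x)); tauto end.
    + intros F G _ _. unfold Ele, Eequiv, Evalid; simpl. split; intros HH M rho;
        specialize (HH M rho); tauto.
  -
    intros A B [[HA1 HA2] [HAv HAq]] [[HB1 HB2] [HBv HBq]].
    split; [split|split].
    + simpl; auto.
    + simpl; intros a Ha; apply in_app_or in Ha; destruct Ha; auto.
    + simpl; auto.
    + intros M rho Hant.
      assert (Hfl : forall X, In X (Fl S D) -> feval M rho X) by (intros; apply Hant; simpl; auto).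
      assert (Himp := Hant _ (or_introl eq_refl)). cbn [feval] in Himp. rewrite Hconj in Himp.
      destruct (classic (feval M rho A)) as [Ha|Ha].
      * destruct (classic (feval M rho B)) as [Hb|Hb].
        -- apply HAq. intros X [<-|HX]; auto. cbn [feval]. intros _. apply Hconj.
           intros w Hw. apply Himp; auto.
        -- apply HBq. intros X [<-|HX]; auto. simpl. tauto.
      * apply HAq. intros X [<-|HX]; auto. simpl. tauto.
  -
    intros A B A' [_ [_ HAq]] [_ [_ HA'q]] HB HAB HBA'.
    split; [auto|split; [auto|]].
    intros M rho Hant.
    assert (Hfl : forall X, In X (Fl S D) -> feval M rho X) by (intros; apply Hant; simpl; auto).
    assert (Himp := Hant _ (or_introl eq_refl)). cbn [feval] in Himp. rewrite Hconj in Himp.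
    destruct (classic (feval M rho B)) as [Hb|Hb].
    + apply HA'q. intros X [<-|HX]; auto. cbn [feval]. intros _. apply Hconj.
      intros w Hw. apply (HBA' M). apply Himp; auto.
    + apply HAq. intros X [<-|HX]; auto. simpl. intros Ha. exfalso; apply Hb.
      apply (HAB M rho Ha).
  -
    exists (ei (canon S D)). split.
    + split; [apply ei_noimp|]. rewrite ei_atoms; auto.
    + unfold Eequiv, Evalid; cbn [feval]; intros. rewrite ei_eval. tauto.
  - intros C0 HC0 Heq.
    assert (HE : forall M rho, feval M rho C0 <-> feval M rho (canon S D)).
    { intros M rho; specialize (Heq M rho); cbn [feval] in Heq; tauto. }
    split.
    + split; [auto|split; [auto|]].
      intros M rho Hant.
      assert (Hfl : forall X, In X (Fl S D) -> feval M rho X) by (intros; apply Hant; simpl; auto).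
      destruct (classic (exists B, In B (Fr S D) /\ feval M rho B)) as [Hr|Hr]; auto.
      exfalso.
      assert (Himp := Hant _ (or_introl eq_refl)). cbn [feval] in Himp. rewrite Hconj in Himp.
      assert (Hc : feval M rho C0).
      { apply HE. unfold canon; simpl. rewrite feval_conj, feval_disj. auto. }
      specialize (Himp Hc).
      assert (Hcw : forall w, In w (dW D) ->
        (forall X, In X (Fl S D) -> feval M (fun x => teval M rho (inst_vec w x)) X) /\
        ~ (exists B, In B (Fr S D) /\ feval M (fun x => teval M rho (inst_vec w x)) B)).
      { intros w Hw. specialize (Himp w Hw). apply HE in Himp. unfold canon in Himp.
        cbn [feval] in Himp. rewrite feval_conj, feval_disj in Himp. auto. }
      assert (Htr : forall comps Hs Us, (forall kF, In kF comps -> fvars_lt (fst kF) (snd kF)) ->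
          vecs_ok comps Us (tvars_lt (dn D)) -> decomp_side comps Hs Us (dW D) ->
          length Hs = length comps ->
          forall X, In X (inst_side comps Hs) ->
          (exists F, In F (inst_side comps Us) /\ fvars_lt 0 F /\
             (feval M rho X <-> feval M rho F)) \/
          (exists F w, In F (inst_side comps Us) /\ In w (dW D) /\
             (feval M rho X <-> feval M (fun x => teval M rho (inst_vec w x)) F))).
      { intros comps Hs Us Hwc [HlU HvU] Hds HlH X HX.
        apply inst_side_in in HX. destruct HX as [i [kF [Hi [X1 [X2 X3]]]]].
        assert (Hi' : i < length Us).
        { rewrite HlU. apply nth_error_Some. congruence. }
        destruct (nth_error Us i) as [Ui|] eqn:EU;
          [|apply nth_error_None in EU; lia].
        assert (Hk := Hwc kF (nth_error_In _ _ X1)).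
        unfold inst_comp in X3. destruct (fst kF) eqn:E.
        - left. destruct X3 as [<-|[]]. exists (snd kF). split; [|split; [auto|tauto]].
          eapply inst_side_in2; eauto. unfold inst_comp. rewrite E. simpl; auto.
        - right. apply in_map_iff in X3. destruct X3 as [v [<- Hv]].
          destruct (proj1 (Hds i kF Hi Ui X1 X2 EU ltac:(lia) v) Hv)
            as [u [w [Hu [Hw ->]]]].
          destruct (HvU i kF Ui u X1 EU Hu) as [Hlu _].
          exists (fsubst (inst_vec u) (snd kF)), w. split; [|split; [auto|]].
          + eapply inst_side_in2; eauto. unfold inst_comp. rewrite E.
            apply in_map_iff; eauto.
          + rewrite !feval_subst. eapply feval_cong; [exact Hk|].
            intros x Hx. unfold inst_vec.
            rewrite <- teval_subst.
            f_equal. rewrite (nth_indep _ (Var x) (tsubst (inst_vec w) (Var x)))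
              by (rewrite length_map; lia).
            apply map_nth. }
      destruct Hher as [[HlA _] [[HlS _] Hq]].
      destruct (Hq M rho) as [B [HB HBe]].
      * intros X HX.
        destruct (Htr _ _ _ Hwfa HuA HdA HlA X HX) as [[F [HF [_ HFe]]]|[F [w [HF [Hw HFe]]]]].
        -- apply HFe; auto.
        -- apply HFe. apply (proj1 (Hcw w Hw)); auto.
      * destruct (Htr _ _ _ Hwfs HuS HdS HlS B HB) as [[F [HF [_ HFe]]]|[F [w [HF [Hw HFe]]]]].
        -- apply Hr. exists F; split; auto. apply HFe; auto.
        -- apply (proj2 (Hcw w Hw)). exists F; split; auto. apply HFe; auto.
    + intros A [_ [_ HAq]] M rho Hc. apply HE in Hc. unfold canon in Hc; simpl in Hc.
      rewrite feval_conj, feval_disj in Hc. destruct Hc as [Hfl Hnr].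
      destruct (classic (feval M rho A)) as [Ha|Ha]; auto. exfalso.
      apply Hnr. apply HAq. intros X [<-|HX]; auto. simpl; tauto.
Qed.
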